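(* Let $G$ be a temporal network whose TEG $\mathcal{G}$ is weakly connected, with each edge $(e_i,e_j)$ weighted by its inter-event time $\tau((e_i,e_j)) = t_j - t_i$. Consider paths in the underlying undirected graph of $\mathcal{G}$, i.e. sequences of vertices $x_0, x_1, \dots, x_k$ such that for each $r$ either $(x_{r-1},x_r)$ or $(x_r,x_{r-1})$ is an edge of $\mathcal{G}$. The signed length of such a path is $\sum_{r=1}^{k} s_r$, where $s_r = \tau((x_{r-1},x_r))$ if $(x_{r-1},x_r)$ is an edge of $\mathcal{G}$ (forward traversal) and $s_r = -\tau((x_r,x_{r-1}))$ otherwise (backward traversal). Then every path of maximal signed length contains both the earliest event and the latest event of the temporal network.
   Context: A temporal network is $G=G(V,E,T)$, where $V\subset\mathbb{N}$ is a set of nodes, $T\subset\mathbb{R}_{\ge 0}$ a non-empty set of times, and $E\subset V^2\times T$ a finite set of events $e_i=(u_i,v_i,t_i)$, with $u_i\neq v_i$. All event times $t_i$ are distinct, and events are indexed in increasing time order. For $\Delta t \in (0,\infty]$ and an event $e_i$ and a node $w\in\{u_i,v_i\}$, let $S(w;i)=\{k : w\in\{u_k,v_k\},\ 0<t_k-t_i<\Delta t\}$. The $\Delta t$-temporal event graph ($\Delta t$-TEG) is the directed graph whose vertex set is $E$ and whose edges are the pairs $(e_i,e_j)$ with $j=\min S(u_i;i)$ or $j=\min S(v_i;i)$ (i.e. each event is joined to the next event, within time $\Delta t$, of each of its two nodes). The TEG is the $\Delta t$-TEG with $\Delta t=\infty$. *)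

(* Defs.v *)
From Stdlib Require Import Reals List Relations.
Import ListNotations.
Open Scope R_scope.

(* A temporal network with [m] events e_0, ..., e_{m-1} (indexed in
   increasing time order); event e_i = (u i, v i, t i).  Nodes are naturals. *)

Definition valid_tnet (m : nat) (u v : nat -> nat) (t : nat -> R) : Prop :=
  (forall i, (i < m)%nat -> u i <> v i) /\
  (forall i, (i < m)%nat -> 0 <= t i) /\
  (forall i j, (i < j)%nat -> (j < m)%nat -> t i < t j).

(* S(w;i) for a window dt; [None] encodes dt = infinity. *)
Definition inS (m : nat) (u v : nat -> nat) (t : nat -> R) (dt : option R)
    (w i k : nat) : Prop :=
  (k < m)%nat /\ (w = u k \/ w = v k) /\ 0 < t k - t i /\
  match dt with None => True | Some d => t k - t i < d end.

Definition dteg_edge (m : nat) (u v : nat -> nat) (t : nat -> R) (dt : option R)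
    (i j : nat) : Prop :=
  (i < m)%nat /\
  exists w, (w = u i \/ w = v i) /\ inS m u v t dt w i j /\
    (forall k, inS m u v t dt w i k -> (j <= k)%nat).

Definition teg_edge m u v t := dteg_edge m u v t None.

Definition teg_weakly_connected m u v t : Prop :=
  forall i j, (i < m)%nat -> (j < m)%nat ->
    clos_refl_trans nat
      (fun a b => teg_edge m u v t a b \/ teg_edge m u v t b a) i j.

Inductive signed_path (m : nat) (u v : nat -> nat) (t : nat -> R) :
    list nat -> R -> Prop :=
  | sp_one x : (x < m)%nat -> signed_path m u v t [x] 0
  | sp_fwd x y p L :
      teg_edge m u v t x y -> signed_path m u v t (y :: p) L ->
      signed_path m u v t (x :: y :: p) ((t y - t x) + L)
  | sp_bwd x y p L :
      ~ teg_edge m u v t x y -> teg_edge m u v t y x ->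
      signed_path m u v t (y :: p) L ->
      signed_path m u v t (x :: y :: p) (- (t x - t y) + L).

(* Main.v *)
Require Import Defs.
From Stdlib Require Import Reals List Relations Lra Lia Classical.
Import ListNotations.
Open Scope R_scope.

Lemma sp_props m u v t q L : signed_path m u v t q L ->
  (forall y, In y q -> (y < m)%nat) /\ q <> [] /\ L = t (last q 0%nat) - t (hd 0%nat q).
Proof.
  induction 1 as [x Hx|x y p L He Hp IH|x y p L Hn He Hp IH].
  - split; [intros y [->|[]]; auto|split; [discriminate|simpl; lra]].
  - destruct IH as [H1 [H2 H3]]. destruct He as [Hx _].
    split; [intros z [->|Hz]; auto|split; [discriminate|]].
    simpl in *. rewrite H3. destruct p; simpl; lra.
  - destruct IH as [H1 [H2 H3]].
    assert (x < m)%nat.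
    { destruct He as [_ [w [_ [[Hk _] _]]]]. exact Hk. }
    split; [intros z [->|Hz]; auto|split; [discriminate|]].
    simpl in *. rewrite H3. destruct p; simpl; lra.
Qed.

Lemma build m u v t x z :
  clos_refl_trans_1n nat
    (fun a b => teg_edge m u v t a b \/ teg_edge m u v t b a) x z ->
  (x < m)%nat -> exists p, signed_path m u v t (x :: p) (t z - t x).
Proof.
  induction 1 as [x|x y z Hr Hc IH]; intros Hx.
  - exists []. replace (t x - t x) with 0 by lra. constructor; auto.
  - assert (Hy : (y < m)%nat).
    { destruct Hr as [[_ [w [_ [[Hk _] _]]]]|[Hk _]]; exact Hk. }
    destruct (IH Hy) as [p Hp].
    exists (y :: p).
    replace (t z - t x) with ((t y - t x) + (t z - t y)) by lra.
    destruct (classic (teg_edge m u v t x y)) as [He|Hn].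
    + apply sp_fwd; auto.
    + destruct Hr as [He|He]; [contradiction|].
      replace (t y - t x) with (- (t x - t y)) by lra.
      apply sp_bwd; auto.
Qed.

Theorem mainTheorem1 (m : nat) (u v : nat -> nat) (t : nat -> R) :
  valid_tnet m u v t ->
  teg_weakly_connected m u v t ->
  forall (p : list nat) (L : R),
    signed_path m u v t p L ->
    (forall (q : list nat) (L' : R), signed_path m u v t q L' -> L' <= L) ->
    In 0%nat p /\ In (m - 1)%nat p.
Proof.
  intros [_ [_ Hmono]] Hconn p L Hp Hmax.
  destruct (sp_props _ _ _ _ _ _ Hp) as [Hall [Hne HL]].
  destruct p as [|a p']; [congruence|].
  set (a' := last (a :: p') 0%nat) in *.
  assert (Ha : (a < m)%nat) by (apply Hall; left; auto).
  assert (Hla : In a' (a :: p')).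
  { unfold a'. clear. revert a. induction p' as [|b p IH]; intros a.
    - left; auto.
    - right. simpl last. change (In (last (b :: p) 0%nat) (b :: p)). apply IH. }
  assert (Ha' : (a' < m)%nat) by auto.
  assert (H0 : (0 < m)%nat) by lia.
  assert (Hc := Hconn 0%nat (m-1)%nat H0 ltac:(lia)).
  apply clos_rt_rt1n in Hc.
  destruct (build _ _ _ _ _ _ Hc H0) as [q Hq].
  specialize (Hmax _ _ Hq). simpl hd in HL.
  assert (E1 : a = 0%nat \/ t 0%nat < t a).
  { destruct a; [auto|right; apply Hmono; lia]. }
  assert (E2 : a' = (m-1)%nat \/ t a' < t (m-1)%nat).
  { destruct (Nat.eq_dec a' (m-1)); [auto|right; apply Hmono; lia]. }
  split.
  - destruct E1 as [->|E1]; [left; auto|].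
    exfalso. destruct E2 as [E2|E2]; [rewrite E2 in HL|]; lra.
  - destruct E2 as [E2|E2]; [rewrite <- E2; auto|].
    exfalso. destruct E1 as [E1|E1]; [rewrite E1 in HL|]; lra.
Qed.
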